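(* Let $\mathcal{X}$ be a finite channel input set with $|\mathcal{X}|=M=2^m$, let $\mathcal{Y}$ be the output set, and let $P_{Y|X}(y|x)$ be the transition density of a memoryless channel. Let $\mu:\mathbb{F}_2^m\to\mathcal{X}$ be a bijective labeling, and for $x\in\mathcal{X}$ and $j=1,\dots,m$ let $b_j(x)\in\{0,1\}$ be the $j$-th bit of the label of $x$. For $b\in\{0,1\}$ let $\mathcal{X}_b^j=\{x\in\mathcal{X}: b_j(x)=b\}$. Let $P_{B_1},\dots,P_{B_m}$ be probability distributions on $\{0,1\}$ and define $P_X^{\rm bicm}(x)=\prod_{j=1}^m P_{B_j}(b_j(x))$. Define the bit metrics $$q_j(b,y)=\sum_{x'\in\mathcal{X}_b^j}P_{Y|X}(y|x')P_X^{\rm bicm}(x'),$$ the symbol metric $q^{\rm bicm}(x,y)=\prod_{j=1}^m q_j(b_j(x),y)$, and the generalized mutual information $$R_{\rm gmi}=\sup_{s>0}\ \mathbb{E}\left[\log\frac{q^{\rm bicm}(X,Y)^s}{\sum_{x'\in\mathcal{X}}q^{\rm bicm}(x',Y)^sP_X^{\rm bicm}(x')}\right],$$ where the expectation is with respect to the joint distribution $P_X^{\rm bicm}(x)P_{Y|X}(y|x)$. Then $$R_{\rm gmi}=\sup_{s>0}\left(\sum_{j=1}^m\mathbb{E}\left[\log\frac{q_j(B_j,Y)^s}{\sum_{b'\in\{0,1\}}q_j(b',Y)^sP_{B_j}(b')}\right]\right),$$ where, for each $j$, the expectation is with respect to the joint distribution $P_{B_j}(b)P_j(y|b)$ with $$P_j(y|b)=\sum_{x\in\mathcal{X}_b^j}\frac{P_{Y|X}(y|x)P_X^{\rm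 bicm}(x)}{\sum_{x'\in\mathcal{X}_b^j}P_X^{\rm bicm}(x')}\quad(\text{for } b \text{ with } P_{B_j}(b)>0).$$ Equivalently, $$R_{\rm gmi}=\sup_{s>0}\left(\sum_{j=1}^m\mathbb{E}\left[\log\frac{q_j(b_j(X),Y)^s}{\sum_{b'\in\{0,1\}}q_j(b',Y)^sP_{B_j}(b')}\right]\right),$$ where the expectation is with respect to $P_X^{\rm bicm}(x)P_{Y|X}(y|x)$.
   Context: This is the setting of bit-interleaved coded modulation (BICM) with possibly non-equiprobable (''shaped'') bits: the $m$ label bits of each transmitted symbol are independent with distributions $P_{B_j}$, and the decoder uses the metric $q^{\rm bicm}$, which treats the bits as independent. Logarithms are natural. *)

(* Defs.v *)
From HB Require Import structures.
From mathcomp Require Import all_boot all_order all_algebra.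
From mathcomp Require Import all_classical all_reals all_analysis.
Set Implicit Arguments. Unset Strict Implicit. Unset Printing Implicit Defensive.
Import Order.TTheory GRing.Theory Num.Theory.
Local Open Scope ring_scope.

Section BICM.
Variables (R : realType) (m : nat) (X : finType).
Variables (d : measure_display) (Y : measurableType d).
Variable (mu : {measure set Y -> \bar R}).   (* reference measure on the output set *)
Variable (W : X -> Y -> R).                  (* transition density P_{Y|X}(y|x) w.r.t. mu *)
Variable (lab : X -> {ffun 'I_m -> bool}).   (* inverse labeling mu^{-1}: x |-> its label *)
Variable (PB : 'I_m -> bool -> R).

Definition bitj (j : 'I_m) (x : X) : bool := lab x j.

Definition PXbicm (x : X) : R := \prod_(j < m) PB j (bitj j x).

Definition qj (j : 'I_m) (b : bool) (y : Y) : R :=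
  \sum_(x' : X | bitj j x' == b) W x' y * PXbicm x'.

Definition qbicm (x : X) (y : Y) : R := \prod_(j < m) qj j (bitj j x) y.

Definition Pj (j : 'I_m) (b : bool) (y : Y) : R :=
  \sum_(x : X | bitj j x == b)
     (W x y * PXbicm x / \sum_(x' : X | bitj j x' == b) PXbicm x').

(* expectation of f(X,Y) w.r.t. P_X^bicm(x) P_{Y|X}(y|x) (density w.r.t. counting x mu) *)
Definition EXY (f : X -> Y -> R) : \bar R :=
  (\sum_(x : X) (PXbicm x)%:E * \int[mu]_y (W x y * f x y)%:E)%E.

Definition EBY (j : 'I_m) (g : bool -> Y -> R) : \bar R :=
  (\sum_(b : bool) (PB j b)%:E * \int[mu]_y (Pj j b y * g b y)%:E)%E.

Definition gmi_obj (s : R) : \bar R :=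
  EXY (fun x y => ln (qbicm x y `^ s /
                      \sum_(x' : X) qbicm x' y `^ s * PXbicm x')).

Definition R_gmi : \bar R :=
  ereal_sup [set gmi_obj s | s in [set s : R | 0 < s]].

Definition bit_ratio (j : 'I_m) (s : R) (b : bool) (y : Y) : R :=
  ln (qj j b y `^ s / \sum_(b' : bool) qj j b' y `^ s * PB j b').

Definition bitwise_obj (s : R) : \bar R :=
  (\sum_(j < m) EBY j (bit_ratio j s))%E.

Definition bitwise_obj_X (s : R) : \bar R :=
  (\sum_(j < m) EXY (fun x y => bit_ratio j s (bitj j x) y))%E.

End BICM.

(* Main.v *)
Require Import Defs.
From HB Require Import structures.
From mathcomp Require Import all_boot all_order all_algebra.
From mathcomp Require Import all_classical all_reals all_analysis.
From mathcomp Require Import measurable_realfun measurable_fun_approximation lebesgue_integral.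
From mathcomp Require Import ring lra.
Import Order.TTheory GRing.Theory Num.Theory.
Local Open Scope ring_scope.

Lemma fin_arith (R : realType) (P N p1 n1 p2 n2 : \bar R) :
  (0 <= N -> 0 <= n1 -> 0 <= n2 -> 0 <= P -> 0 <= p1 -> 0 <= p2 ->
  P < +oo -> p1 < +oo -> p2 < +oo ->
  P + n1 + n2 = N + p1 + p2 -> P - N = (p1 - n1) + (p2 - n2))%E.
Proof.
case: P => [P||] //; case: p1 => [p1||] //; case: p2 => [p2||] //;
case: N => [N||] //; case: n1 => [n1||] //; case: n2 => [n2||] //.
all: rewrite ?lee_fin => ? ? ? ? ? ? ? ? ? H.
all: rewrite -?EFinD -?EFinN -?EFinB ?addNye ?addeNy ?addye ?addey //= in H *.
all: try (move: H => /eqP; rewrite eqe => /eqP H; apply/eqP; rewrite eqe; apply/eqP; lra).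
Qed.

Lemma mulBge0 (R : realType) (c : R) (a b : \bar R) : 0 < c ->
  (0 <= a -> 0 <= b -> c%:E * (a - b) = c%:E * a - c%:E * b)%E.
Proof.
move=> c0; have c0' : (0 < c%:E)%E by rewrite lte_fin.
case: a => [a||] //; case: b => [b||] //; rewrite ?lee_fin => ? ?.
all: rewrite ?gt0_muley ?gt0_muleNy //.
all: try by rewrite -EFinB -!EFinM -EFinB mulrBr.
all: try by rewrite -EFinM.
all: try by rewrite -EFinN -EFinM addye // gt0_muley.
Qed.

Section Gen.
Context (d : measure_display) (T : measurableType d) (R : realType)
  (mu : {measure set T -> \bar R}).

Lemma maxr0E (a : R) : Num.max a 0 = a + Num.max (- a) 0.
Proof.
have [h|h] := lerP a 0.
  by rewrite max_l ?oppr_ge0 // addrN.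
by rewrite max_r ?addr0 // lerNl oppr0 ltW.
Qed.

Lemma intPN (f : T -> R) : (\int[mu]_y (f y)%:E =
  \int[mu]_y (Num.max (f y) 0)%:E - \int[mu]_y (Num.max (- f y) 0)%:E)%E.
Proof.
rewrite integralE; congr (_ - _)%E; apply: eq_integral => y _.
  by rewrite funeposE EFin_max.
by rewrite funenegE EFin_max.
Qed.

Lemma intP_ge0 (f : T -> R) : (0 <= \int[mu]_y (Num.max (f y) 0)%:E)%E.
Proof. by apply: integral_ge0 => y _; rewrite lee_fin le_max lexx orbT. Qed.

Lemma mmax (f : T -> R) : measurable_fun setT f ->
  measurable_fun [set: T] (fun y => (Num.max (f y) 0)%:E : \bar R).
Proof.
move=> mf; apply/measurable_EFinP; apply: measurable_maxr => //.
Qed.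

Definition posint (f : T -> R) := (\int[mu]_y (Num.max (f y) 0)%:E < +oo)%E.

Lemma int3max (h1 h2 h3 : T -> R) : measurable_fun setT h1 ->
  measurable_fun setT h2 -> measurable_fun setT h3 ->
  (\int[mu]_y (Num.max (h1 y) 0 + Num.max (h2 y) 0 + Num.max (h3 y) 0)%:E =
   \int[mu]_y (Num.max (h1 y) 0)%:E + \int[mu]_y (Num.max (h2 y) 0)%:E
   + \int[mu]_y (Num.max (h3 y) 0)%:E)%E.
Proof.
move=> m1 m2 m3.
have g0 (h : T -> R) y : (0 <= (Num.max (h y) 0)%:E)%E.
  by rewrite lee_fin le_max lexx orbT.
under eq_integral do rewrite EFinD EFinD.
rewrite ge0_integralD //; last by apply: mmax.
- by rewrite ge0_integralD //; apply: mmax.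
- by move=> y _; rewrite adde_ge0.
- by apply: emeasurable_funD; apply: mmax.
Qed.

Lemma intD2 (f g : T -> R) : measurable_fun setT f -> measurable_fun setT g ->
  posint f -> posint g ->
  (\int[mu]_y (f y + g y)%:E = \int[mu]_y (f y)%:E + \int[mu]_y (g y)%:E)%E.
Proof.
move=> mf mg pf pg.
have mfg : measurable_fun setT (fun y => f y + g y) by exact: measurable_funD.
have mN (h : T -> R) : measurable_fun setT h -> measurable_fun setT (fun y => - h y).
  by move=> mh; exact: measurable_funN.
rewrite (intPN (fun y => f y + g y)) (intPN f) (intPN g); apply: fin_arith; rewrite ?intP_ge0 //.
- have H1 : (\int[mu]_y (Num.max (f y + g y) 0)%:E <= \int[mu]_y ((Num.max (f y) 0)%:E + (Num.max (g y) 0)%:E))%E.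
    apply: ge0_le_integral => //.
    + by move=> y _; rewrite lee_fin le_max lexx orbT.
    + exact: mmax.
    + by apply: emeasurable_funD; exact: mmax.
    + move=> y _; rewrite lee_fin; rewrite ge_max; apply/andP; split.
        by rewrite lerD // le_max lexx.
      by rewrite addr_ge0 // le_max lexx orbT.
  apply: le_lt_trans H1 _.
  rewrite ge0_integralD //; first by rewrite lte_add_pinfty.
  + by move=> y _; rewrite lee_fin le_max lexx orbT.
  + exact: mmax.
  + by move=> y _; rewrite lee_fin le_max lexx orbT.
  + exact: mmax.
- rewrite -(@int3max (fun y => f y + g y) (fun y => - f y) (fun y => - g y)) //; try exact: mN.
  rewrite -(@int3max (fun y => - (f y + g y)) f g) //; try exact: mN.
  apply: eq_integral => y _; congr EFin.
  rewrite (maxr0E (f y + g y)) (maxr0E (f y)) (maxr0E (g y)); lra.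
Qed.

Lemma posintD (f g : T -> R) : measurable_fun setT f -> measurable_fun setT g ->
  posint f -> posint g -> posint (fun y => f y + g y).
Proof.
move=> mf mg pf pg; rewrite /posint.
have mfg : measurable_fun setT (fun y => f y + g y) by exact: measurable_funD.
have H1 : (\int[mu]_y (Num.max (f y + g y) 0)%:E <= \int[mu]_y ((Num.max (f y) 0)%:E + (Num.max (g y) 0)%:E))%E.
  apply: ge0_le_integral => //.
  + by move=> y _; rewrite lee_fin le_max lexx orbT.
  + exact: mmax.
  + by apply: emeasurable_funD; exact: mmax.
  + move=> y _; rewrite lee_fin; rewrite ge_max; apply/andP; split.
      by rewrite lerD // le_max lexx.
    by rewrite addr_ge0 // le_max lexx orbT.
apply: le_lt_trans H1 _.
rewrite ge0_integralD //; first by rewrite lte_add_pinfty.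
+ by move=> y _; rewrite lee_fin le_max lexx orbT.
+ exact: mmax.
+ by move=> y _; rewrite lee_fin le_max lexx orbT.
+ exact: mmax.
Qed.

Lemma int_sum (I : Type) (s : seq I) (P : pred I) (F : I -> T -> R) :
  (forall i, measurable_fun setT (F i)) -> (forall i, posint (F i)) ->
  (\int[mu]_y (\sum_(i <- s | P i) F i y)%:E =
   \sum_(i <- s | P i) \int[mu]_y (F i y)%:E)%E /\
  measurable_fun setT (fun y => \sum_(i <- s | P i) F i y) /\
  posint (fun y => \sum_(i <- s | P i) F i y).
Proof.
move=> mF pF; elim: s => [|a s [IH1 [IH2 IH3]]].
  split.
    by rewrite big_nil; under eq_integral do rewrite big_nil; exact: integral0.
  have -> : (fun y => \sum_(i <- [::] | P i) F i y) = cst 0.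
    by apply/funext => y; rewrite big_nil.
  split; first exact: measurable_cst.
  rewrite /posint; under eq_integral do rewrite maxxx.
  by rewrite integral0.
have E : (fun y => \sum_(i <- a :: s | P i) F i y) =
  (fun y => if P a then F a y + \sum_(i <- s | P i) F i y else \sum_(i <- s | P i) F i y).
  by apply/funext => y; rewrite big_cons.
split.
  rewrite big_cons; under eq_integral do rewrite big_cons.
  by case: (P a) => //; rewrite intD2 // IH1.
rewrite E; case: (P a) => //.
split; first exact: measurable_funD.
exact: posintD.
Qed.

Lemma intZ (c : R) (f : T -> R) : 0 <= c -> measurable_fun setT f ->
  (\int[mu]_y (c * f y)%:E = c%:E * \int[mu]_y (f y)%:E)%E.
Proof.
move=> c0 mf; have [->|cp] := eqVneq c 0.
  under eq_integral do rewrite mul0r.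
  by rewrite integral0 mul0e.
have c0' : 0 < c by rewrite lt_def cp c0.
rewrite (intPN (fun y => c * f y)) (intPN f) mulBge0 ?intP_ge0 //.
rewrite -!ge0_integralZl_EFin //; try (by move=> y _; rewrite lee_fin le_max lexx orbT);
  try (apply: mmax; try exact: measurable_funN).
congr (_ - _)%E; apply: eq_integral => y _; rewrite -EFinM; congr EFin.
- by rewrite -[in LHS](mulr0 c) -maxr_pMr // ltW.
- by rewrite -mulrN -[in LHS](mulr0 c) -maxr_pMr // ltW.
- exact: mf.
Qed.

Lemma posint_bound (f w : T -> R) (c : R) : 0 <= c -> measurable_fun setT f ->
  measurable_fun setT w -> (forall y, 0 <= w y) ->
  (\int[mu]_y (w y)%:E < +oo)%E ->
  (forall y, f y <= c * w y) -> posint f.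
Proof.
move=> c0 mf mw w0 wfin fle; rewrite /posint.
have H1 : (\int[mu]_y (Num.max (f y) 0)%:E <= \int[mu]_y (c * w y)%:E)%E.
  apply: ge0_le_integral => //.
  + by move=> y _; rewrite lee_fin le_max lexx orbT.
  + exact: mmax.
  + apply/measurable_EFinP; apply: measurable_funM => //.
  + by move=> y _; rewrite lee_fin ge_max fle mulr_ge0.
apply: le_lt_trans H1 _.
rewrite intZ //.
have wge : (0 <= \int[mu]_y (w y)%:E)%E by apply: integral_ge0 => y _; rewrite lee_fin.
move: wfin wge; case: (\int[mu]_y (w y)%:E)%E => [r||] //.
move=> _ _; by rewrite -EFinM ltry.
Qed.

End Gen.

Section BICMproof.
Context (R : realType) (m : nat) (X : finType) (d : measure_display) (Y : measurableType d)
  (mu : {measure set Y -> \bar R}) (W : X -> Y -> R)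
  (lab : X -> {ffun 'I_m -> bool}) (PB : 'I_m -> bool -> R).
Hypotheses (hlab : bijective lab) (W0 : forall x y, 0 <= W x y)
  (mW : forall x, measurable_fun setT (W x))
  (W1 : forall x, (\int[mu]_y (W x y)%:E = 1)%E)
  (PB0 : forall j b, 0 <= PB j b) (PB1 : forall j, PB j false + PB j true = 1).

Local Notation bj := (bitj lab).
Local Notation PX := (PXbicm lab PB).
Local Notation q := (qj W lab PB).
Local Notation br := (bit_ratio W lab PB).

Lemma PB_le1 j b : PB j b <= 1.
Proof. by have := PB1 j; have := PB0 j false; have := PB0 j true; case: b => ? ? ?; lra. Qed.

Lemma PX_ge0 x : 0 <= PX x.
Proof. by apply: prodr_ge0 => j _. Qed.

Lemma PX_split j x : PX x = PB j (bj j x) * \prod_(k | k != j) PB k (bj k x).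
Proof. by rewrite /PXbicm (bigD1 j). Qed.

Lemma PX_pos j x : 0 < PX x -> 0 < PB j (bj j x).
Proof.
move=> h; rewrite lt_def PB0 andbT; apply/negP => /eqP e.
by move: h; rewrite (PX_split j) e mul0r ltxx.
Qed.

Lemma q_ge0 j b y : 0 <= q j b y.
Proof. by apply: sumr_ge0 => x _; rewrite mulr_ge0 // PX_ge0. Qed.

Lemma q_ge j x y : W x y * PX x <= q j (bj j x) y.
Proof.
rewrite /qj (bigD1 x) //= lerDl; apply: sumr_ge0 => z _.
by rewrite mulr_ge0 // PX_ge0.
Qed.

Lemma meas_q j b : measurable_fun setT (q j b).
Proof.
have -> : q j b = fun y => \sum_(x' <- index_enum X)
   (if bitj lab j x' == b then W x' y * PX x' else 0).
  by apply/funext => y; rewrite /qj big_mkcond.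
apply: measurable_sum => x'; case: (bitj lab j x' == b); last exact: measurable_cst.
by apply: measurable_funM => //; exact: measurable_cst.
Qed.

Lemma meas_br j s b : measurable_fun setT (br j s b).
Proof.
rewrite /bit_ratio.
suff mi : measurable_fun setT (fun y => q j b y `^ s / \sum_(b' : bool) q j b' y `^ s * PB j b').
  by apply: (measurableT_comp _ mi).
have -> : (fun y => q j b y `^ s / \sum_(b' : bool) q j b' y `^ s * PB j b') =
  (fun y => q j b y `^ s * (\sum_(b' : bool) q j b' y `^ s * PB j b') `^ (-1)).
  apply/funext => y; rewrite powR_inv1 //.
  by apply: sumr_ge0 => c _; rewrite mulr_ge0 ?powR_ge0.
apply: measurable_funM.
  exact: (measurableT_comp (measurable_powR s) (meas_q j b)).
have ms : measurable_fun setT (fun y => \sum_(b' : bool) q j b' y `^ s * PB j b').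
  apply: measurable_sum => c; apply: measurable_funM; last exact: measurable_cst.
  exact: (measurableT_comp (measurable_powR s) (meas_q j c)).
exact: (measurableT_comp (measurable_powR (-1)) ms).
Qed.

Lemma br_le j s b y : 0 < s -> 0 < PB j b -> br j s b y <= - ln (PB j b).
Proof.
move=> s0 pb; rewrite /bit_ratio.
have Da : q j b y `^ s * PB j b <= \sum_(b' : bool) q j b' y `^ s * PB j b'.
  rewrite big_bool /=; case: b {pb}.
    by rewrite lerDl mulr_ge0 ?powR_ge0.
  by rewrite lerDr mulr_ge0 ?powR_ge0.
set a := q j b y `^ s in Da *.
set D := \sum_(b' : bool) _ in Da *.
have a0 : 0 <= a by rewrite powR_ge0.
have lnpb : ln (PB j b) <= 0 by rewrite ln_le0 // PB_le1.
have [a00|ap] := eqVneq a 0.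
  by rewrite a00 mul0r ln0 // lerNr oppr0.
have ap' : 0 < a by rewrite lt_def ap a0.
have Dp : 0 < D by apply: lt_le_trans Da; rewrite mulr_gt0.
rewrite -lnV ?posrE //; rewrite ler_ln ?posrE ?divr_gt0 ?invr_gt0 //.
by rewrite ler_pdivrMr // mulrC ler_pdivlMr.
Qed.

Lemma sumlab (G : 'I_m -> bool -> R) :
  \sum_(x : X) \prod_(j < m) G j (bj j x) = \prod_(j < m) \sum_(c : bool) G j c.
Proof.
rewrite bigA_distr_bigA (reindex lab) //; exact: onW_bij.
Qed.

Lemma S_eq j b : \sum_(x | bj j x == b) PX x = PB j b.
Proof.
pose F k c := if k == j then (if c == b then PB k c else 0) else PB k c.
rewrite big_mkcond.
transitivity (\sum_(x : X) \prod_(k < m) F k (bj k x)).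
  apply: eq_bigr => x _; rewrite (bigD1 j) //= /F eqxx (PX_split j).
  have -> : \prod_(k < m | k != j) (if k == j then (if bj k x == b then PB k (bj k x) else 0) else PB k (bj k x)) =
            \prod_(k < m | k != j) PB k (bj k x).
    by apply: eq_bigr => k kj; rewrite (negbTE kj).
  by case: (bj j x == b); rewrite ?mul0r.
rewrite sumlab (bigD1 j) //= /F eqxx.
rewrite [X in _ * X]big1 ?mulr1; last first.
  move=> k kj; by rewrite (negbTE kj) big_bool /= addrC PB1.
rewrite big_bool /= /F; clear F.
by case: b => /=; rewrite ?addr0 ?add0r.
Qed.

Lemma powR_prod (I : Type) (r : seq I) (P : pred I) (F : I -> R) (s : R) :
  (forall i, 0 <= F i) ->
  (\prod_(i <- r | P i) F i) `^ s = \prod_(i <- r | P i) (F i `^ s).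
Proof.
move=> F0; elim: r => [|a r IH]; first by rewrite !big_nil powR1.
rewrite !big_cons; case: (P a) => //.
by rewrite powRM // ?IH // prodr_ge0.
Qed.

Lemma ln_prod (I : Type) (r : seq I) (P : pred I) (F : I -> R) :
  (forall i, P i -> 0 < F i) ->
  ln (\prod_(i <- r | P i) F i) = \sum_(i <- r | P i) ln (F i).
Proof.
move=> F0; elim: r => [|a r IH]; first by rewrite !big_nil ln1.
rewrite !big_cons; case: ifP => // Pa.
by rewrite lnM ?posrE ?IH // ?F0 // prodr_gt0.
Qed.

Lemma D_pos j y c s : 0 < q j c y -> 0 < PB j c ->
  0 < \sum_(c' : bool) q j c' y `^ s * PB j c'.
Proof.
move=> qp pp; rewrite (bigD1 c) //=.
apply: (@lt_le_trans _ _ (q j c y `^ s * PB j c)); first by rewrite mulr_gt0 // powR_gt0.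
by rewrite lerDl sumr_ge0 // => c' _; rewrite mulr_ge0 // powR_ge0.
Qed.

Lemma ptA s x y : 0 < PX x ->
  W x y * ln (qbicm W lab PB x y `^ s / \sum_(x' : X) qbicm W lab PB x' y `^ s * PX x')
  = \sum_(j < m) W x y * br j s (bj j x) y.
Proof.
move=> PXp.
have [W00|Wp] : W x y = 0 \/ 0 < W x y.
  by have := W0 x y; rewrite le_eqVlt => /orP [/eqP <-|->]; [left|right].
  by rewrite W00 mul0r big1 // => j _; rewrite mul0r.
rewrite -mulr_sumr; congr (_ * _).
have qpos j : 0 < q j (bj j x) y.
  exact: lt_le_trans (mulr_gt0 Wp PXp) (q_ge j x y).
rewrite /qbicm powR_prod; last by move=> j; exact: q_ge0.
have -> : \sum_(x' : X) (\prod_(j < m) q j (bj j x') y) `^ s * PX x' =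
          \prod_(j < m) \sum_(c : bool) q j c y `^ s * PB j c.
  rewrite -sumlab; apply: eq_bigr => x' _.
  rewrite powR_prod; last by move=> j; exact: q_ge0.
  by rewrite /PXbicm -big_split.
rewrite -prodf_div ln_prod //.
move=> j _; rewrite divr_gt0 ?powR_gt0 //.
by apply: D_pos => //; exact: PX_pos.
Qed.

Lemma PX_cases x : PX x = 0 \/ 0 < PX x.
Proof. by have := PX_ge0 x; rewrite le_eqVlt => /orP [/eqP <-|->]; [left|right]. Qed.

Lemma meas_Wbr x j s b : measurable_fun setT (fun y => W x y * br j s b y).
Proof. by apply: measurable_funM => //; exact: meas_br. Qed.

Lemma pos_Wbr x j s b c : 0 < s -> 0 < PB j b -> 0 <= c ->
  @posint _ _ _ mu (fun y => c * (W x y * br j s b y)).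
Proof.
move=> s0 pb c0.
apply: (@posint_bound _ _ _ mu _ (W x) (c * - ln (PB j b))).
- by rewrite mulr_ge0 // lerNr oppr0 ln_le0 // PB_le1.
- by apply: measurable_funM; [exact: measurable_cst|exact: meas_Wbr].
- exact: mW.
- exact: W0.
- by rewrite W1 ltry.
- move=> y; rewrite -mulrA ler_wpM2l // mulrC ler_wpM2r //; exact: br_le.
Qed.

Lemma partA_x s x : 0 < s ->
  ((PX x)%:E * \int[mu]_y (W x y * ln (qbicm W lab PB x y `^ s /
      \sum_(x' : X) qbicm W lab PB x' y `^ s * PX x'))%:E =
   \sum_(j < m) (PX x)%:E * \int[mu]_y (W x y * br j s (bj j x) y)%:E)%E.
Proof.
move=> s0; have [PX0|PXp] := PX_cases x.
  by rewrite PX0 mul0e big1 // => j _; rewrite mul0e.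
under eq_integral do rewrite ptA //.
have mF j : measurable_fun setT (fun y => PX x * (W x y * br j s (bj j x) y)).
  by apply: measurable_funM; [exact: measurable_cst|exact: meas_Wbr].
have pF j : @posint _ _ _ mu (fun y => PX x * (W x y * br j s (bj j x) y)).
  by apply: pos_Wbr => //; [exact: PX_pos|exact: PX_ge0].
have [I1 [I2 I3]] := @int_sum _ _ _ mu _ (index_enum 'I_m) xpredT _ mF pF.
rewrite -(@intZ _ _ _ mu (PX x) (fun y => \sum_(j < m) W x y * br j s (bj j x) y)); last 2 first.
- exact: PX_ge0.
- by apply: measurable_sum => j; exact: meas_Wbr.
under eq_integral do rewrite mulr_sumr.
rewrite I1; apply: eq_bigr => j _.
rewrite (@intZ _ _ _ mu (PX x) (fun y => W x y * br j s (bj j x) y)) //.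
- exact: PX_ge0.
- exact: meas_Wbr.
Qed.

Lemma partB_jb s j b : 0 < s ->
  ((PB j b)%:E * \int[mu]_y (Pj W lab PB j b y * br j s b y)%:E =
   \sum_(x | bj j x == b) (PX x)%:E * \int[mu]_y (W x y * br j s b y)%:E)%E.
Proof.
move=> s0.
have [PB00|PBp] : PB j b = 0 \/ 0 < PB j b.
  by have := PB0 j b; rewrite le_eqVlt => /orP [/eqP <-|->]; [left|right].
  rewrite PB00 mul0e big1 // => x /eqP bx.
  by rewrite (PX_split j) bx PB00 mul0r mul0e.
have mF x : measurable_fun setT (fun y => PX x * (W x y * br j s b y)).
  by apply: measurable_funM; [exact: measurable_cst|exact: meas_Wbr].
have pF x : @posint _ _ _ mu (fun y => PX x * (W x y * br j s b y)).
  by apply: pos_Wbr => //; exact: PX_ge0.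
have [I1 [I2 I3]] := @int_sum _ _ _ mu _ (index_enum X) (fun x => bj j x == b) _ mF pF.
have PBn : PB j b != 0 by rewrite gt_eqF.
under eq_integral => y _.
  rewrite (_ : Pj W lab PB j b y * br j s b y =
     (PB j b)^-1 * \sum_(x | bj j x == b) PX x * (W x y * br j s b y)).
  over.
  rewrite /Pj S_eq mulr_suml mulr_sumr; apply: eq_bigr => x _.
  by rewrite /=; field.
rewrite (@intZ _ _ _ mu ((PB j b)^-1) (fun y => \sum_(x | bj j x == b) PX x * (W x y * br j s b y))) //; last first.
  by rewrite invr_ge0 ltW.
rewrite muleA -EFinM mulfV // mul1e I1; apply: eq_bigr => x _.
by rewrite (@intZ _ _ _ mu (PX x) (fun y => W x y * br j s b y)) //; [exact: PX_ge0|exact: meas_Wbr].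
Qed.

Lemma partB_j s j : 0 < s ->
  EBY mu W lab PB j (br j s) = EXY mu W lab PB (fun x y => br j s (bj j x) y).
Proof.
move=> s0; rewrite /EBY /EXY big_bool (bigID (fun x => bj j x)).
rewrite (partB_jb s j true s0).
rewrite (partB_jb s j false s0).

apply: congr2; apply: eq_big => x.
- by rewrite eqb_id.
- by move=> /eqP ->.
- by rewrite eqbF_neg.
- by move=> /eqP ->.
Qed.
End BICMproof.

Theorem theorem1 (R : realType) (m : nat) (X : finType)
    (d : measure_display) (Y : measurableType d)
    (mu : {measure set Y -> \bar R}) (W : X -> Y -> R)
    (lab : X -> {ffun 'I_m -> bool}) (PB : 'I_m -> bool -> R) :
  #|X| = (2 ^ m)%N ->
  bijective lab ->
  (forall x y, 0 <= W x y) ->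
  (forall x, measurable_fun setT (W x)) ->
  (forall x, (\int[mu]_y (W x y)%:E = 1)%E) ->
  (forall j b, 0 <= PB j b) ->
  (forall j, PB j false + PB j true = 1) ->
  R_gmi mu W lab PB =
    ereal_sup [set bitwise_obj mu W lab PB s | s in [set s : R | 0 < s]] /\
  R_gmi mu W lab PB =
    ereal_sup [set bitwise_obj_X mu W lab PB s | s in [set s : R | 0 < s]].
Proof.
move=> _ hlab W0 mW W1 PB0 PB1.
have A s : 0 < s -> gmi_obj mu W lab PB s = bitwise_obj_X mu W lab PB s.
  move=> s0; rewrite /gmi_obj /bitwise_obj_X /EXY exchange_big /=.
  by apply: eq_bigr => x _; apply: (@partA_x _ _ _ _ _ mu W lab PB hlab W0 mW W1 PB0 PB1 s x s0).
have B s : 0 < s -> bitwise_obj mu W lab PB s = bitwise_obj_X mu W lab PB s.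
  move=> s0; rewrite /bitwise_obj /bitwise_obj_X; apply: eq_bigr => j _.
  exact: (@partB_j _ _ _ _ _ mu W lab PB hlab W0 mW W1 PB0 PB1 s j s0).
rewrite /R_gmi; split; congr ereal_sup; apply: eq_imagel => s s0 /=.
  by rewrite A // B.
exact: A.
Qed.
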